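(* Let $u^2:S\times B\to\mathbb{R}$ and let $y:S\to\Delta(B)$ be a non-constant map such that $U^2(\mu_0,y)\ge v^2$. Then every neighborhood of $u^2$ in $\mathbb{R}^{S\times B}$ contains a function $\tilde u^2:S\times B\to\mathbb{R}$ such that $\tilde U^2(\mu_0,y)>\tilde v^2$, where $\tilde U^2,\tilde v^2$ are computed with $\tilde u^2$ in place of $u^2$.
   Context: $S$ and $B$ are finite sets, $m\in\Delta(S)$ has full support (the invariant measure of an irreducible aperiodic Markov chain on $S$). $\mu_0$ is the distribution on $S\times S$ with $\mu_0(s,s)=m(s)$ and $\mu_0(s,t)=0$ for $s\ne t$. For a receiver payoff $u^2:S\times B\to\mathbb{R}$ (extended linearly to mixed actions) and $y:S\to\Delta(B)$, $U^2(\mu_0,y)=\sum_{s\in S}m(s)u^2(s,y(\cdot\mid s))$ and $v^2=\max_{b\in B}\sum_{s\in S}m(s)u^2(s,b)$. A map $y$ is constant if $y(\cdot\mid s)$ does not depend on $s$. *)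

(* Defs.v *)
From mathcomp Require Import all_boot all_order all_algebra.
From mathcomp Require Import reals.
Set Implicit Arguments. Unset Strict Implicit. Unset Printing Implicit Defensive.
Import Order.TTheory GRing.Theory Num.Theory.
Local Open Scope ring_scope.

Definition is_distr {R : realType} {X : finType} (p : X -> R) : Prop :=
  (forall x, 0 <= p x) /\ \sum_(x : X) p x = 1.

Definition u_mixed {R : realType} {S B : finType}
  (u : S -> B -> R) (s : S) (q : B -> R) : R :=
  \sum_(b : B) q b * u s b.

Definition U2 {R : realType} {S B : finType}
  (m : S -> R) (u : S -> B -> R) (y : S -> B -> R) : R :=
  \sum_(s : S) m s * u_mixed u s (y s).

(* v^2 = max_b sum_s m(s) u^2(s,b); B is assumed nonempty (b0 witness) *)
Definition v2 {R : realType} {S B : finType}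
  (m : S -> R) (u : S -> B -> R) (b0 : B) : R :=
  \big[Num.max/(\sum_(s : S) m s * u s b0)]_(b : B) \sum_(s : S) m s * u s b.

Definition constant_map {R : realType} {S B : finType} (y : S -> B -> R) : Prop :=
  forall s t : S, forall b : B, y s b = y t b.

(* Main.v *)
Require Import Defs.
From mathcomp Require Import all_boot all_order all_algebra.
From mathcomp Require Import reals.
From mathcomp Require Import ring lra.
Import Order.TTheory GRing.Theory Num.Theory.
Local Open Scope ring_scope.

Theorem lemma11 (R : realType) (S B : finType) (b0 : B)
  (m : S -> R) (hm : is_distr m) (hmpos : forall s, 0 < m s)
  (u : S -> B -> R) (y : S -> B -> R)
  (hy : forall s, is_distr (y s))
  (hnc : ~ constant_map y)
  (hU : v2 m u b0 <= U2 m u y) :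
  forall eps : R, 0 < eps ->
    exists ut : S -> B -> R,
      (forall s b, `|ut s b - u s b| < eps) /\
      v2 m ut b0 < U2 m ut y.
Proof.
move=> eps heps.
case: hm => hm0 hm1.
pose yb b := \sum_(s : S) m s * y s b.
pose d s b := y s b - yb b.
pose del := eps / 2.
exists (fun s b => u s b + del * d s b).
have y01 : forall s b, 0 <= y s b <= 1.
  move=> s b; case: (hy s) => h0 h1; rewrite h0 /= -h1 (bigD1 b) //= lerDl.
  by apply: sumr_ge0 => i _.
have yb01 : forall b, 0 <= yb b <= 1.
  move=> b; apply/andP; split.
    by apply: sumr_ge0 => s _; apply: mulr_ge0 => //; case/andP: (y01 s b).
  rewrite -hm1; apply: ler_sum => s _.
  rewrite -[leRHS]mulr1; apply: ler_wpM2l => //; by case/andP: (y01 s b).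
have hd0 : forall b, \sum_(s : S) m s * d s b = 0.
  move=> b; rewrite /d.
  under eq_bigr => s _ do rewrite mulrBr.
  by rewrite sumrB -big_distrl /= hm1 mul1r subrr.
split.
  move=> s b; rewrite addrC addKr normrM /del.
  have h1 : `|d s b| <= 1.
    rewrite ler_norml /d; move: (y01 s b) (yb01 b) => /andP[? ?] /andP[? ?].
    apply/andP; split; lra.
  have h2 : `|eps / 2| = eps / 2 by rewrite ger0_norm //; lra.
  rewrite h2; have h3 : 0 <= `|d s b| by [].
  nra.
have hv : v2 m (fun s b => u s b + del * d s b) b0 = v2 m u b0.
  have H : forall b, \sum_(s : S) m s * (u s b + del * d s b)
                     = \sum_(s : S) m s * u s b.
    move=> b; under eq_bigr => s _ do rewrite mulrDr.
    rewrite big_split /=.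
    under [X in _ + X]eq_bigr => s _ do rewrite mulrCA.
    by rewrite -big_distrr /= hd0 mulr0 addr0.
  rewrite /v2 H; apply: eq_bigr => b _; exact: H.
pose V := \sum_(s : S) m s * \sum_(b : B) y s b * d s b.
have hU2 : U2 m (fun s b => u s b + del * d s b) y = U2 m u y + del * V.
  rewrite /U2 /V /u_mixed mulr_sumr -big_split /=; apply: eq_bigr => s _.
  rewrite mulr_sumr mulr_sumr mulr_sumr mulr_sumr -big_split /=.
  apply: eq_bigr => b _; ring.
have hV : V = \sum_(s : S) \sum_(b : B) m s * (d s b) ^+ 2.
  have E : \sum_(s : S) \sum_(b : B) m s * yb b * d s b = 0.
    rewrite exchange_big /=; apply: big1 => b _.
    under eq_bigr => s _ do rewrite mulrAC.
    by rewrite -big_distrl /= hd0 mul0r.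
  transitivity (\sum_(s : S) \sum_(b : B) m s * (d s b) ^+ 2
     + \sum_(s : S) \sum_(b : B) m s * yb b * d s b); last by rewrite E addr0.
  rewrite -big_split /V; apply: eq_bigr => s _.
  rewrite mulr_sumr -big_split; apply: eq_bigr => b _; rewrite /d; move: (yb b) (y s b) (m s) => z w v; change (v * (w * (w - z)) = v * (w - z) ^+ 2 + v * z * (w - z)); ring.
have Vpos : 0 < V.
  have hge : forall s, 0 <= \sum_(b : B) m s * (d s b) ^+ 2.
    by move=> s; apply: sumr_ge0 => b _; apply: mulr_ge0; [exact: hm0|exact: sqr_ge0].
  rewrite hV lt_def; apply/andP; split; last by apply: sumr_ge0 => s _.
  apply/negP => /eqP /(psumr_eq0P (fun s _ => hge s)) Hs.
  apply: hnc => s t b.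
  have Z : forall s, d s b = 0.
    move=> s'; have := Hs s' isT.
    have hg : forall b', true -> 0 <= m s' * d s' b' ^+ 2.
      by move=> b' _; apply: mulr_ge0; [exact: hm0|exact: sqr_ge0].
    move/(psumr_eq0P hg) => Hb.
    have : m s' * d s' b ^+ 2 = 0 by apply: Hb.
    move/eqP; rewrite mulf_eq0 (gt_eqF (hmpos s')) /= sqrf_eq0 => /eqP //.
  have Zs := Z s; have Zt := Z t.
  by rewrite (subr0_eq Zs) (subr0_eq Zt).
rewrite hv hU2; apply: (le_lt_trans hU); rewrite ltrDl.
by apply: mulr_gt0 => //; rewrite /del divr_gt0.
Qed.
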